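(* Let $r\ge 3$ be an integer, let $\varphi$ be an instance of Exact $r$-SAT, and let $G(\varphi)$ be the graph constructed from $\varphi$ as described in the context. If $\mathrm{wcol}_r(G(\varphi)) \leq 2r-1$, then $\varphi$ has a satisfying assignment.
   Context: Exact $r$-SAT: given a CNF formula $\varphi$ with clauses $c_1,\dots,c_m$ over variables $x_1,\dots,x_n$ such that each clause contains exactly $r$ different variables, decide whether $\varphi$ is satisfiable. An $\ell$-subdivided edge between $a$ and $b$ is an induced path with $\ell$ internal vertices (subdivision vertices) joining $a$ and $b$, whose internal vertices have no other neighbors. Construction of $G(\varphi)$: for each clause $c_i$ create $2r$ vertices $u_i^1,\dots,u_i^{2r}$. For each variable $x_j$ create two vertices $v_j,v'_j$ (for the literals $x_j$ and $\overline{x}_j$) joined by an edge. For each clause $c_i$ containing literal $x_j$, add two $(r-2)$-subdivided edges from $v_j$ to each of $u_i^1,\dots,u_i^{2r}$; for each clause $c_i$ containing $\overline{x}_j$, add two $(r-2)$-subdivided edges from $v'_j$ to each of $u_i^1,\dots,u_i^{2r}$. Weak coloring numbers: for a graph $G=(V,E)$ and a total order $\sigma$ of $V$, a vertex $v\neq u$ is weakly $r$-reachable from $u$ if $u <_\sigma v$ and there is a $u$–$v$ path $P$ of length at most $r$ all of whose vertices other than $u,v$ precede $v$ in $\sigma$; $\mathrm{wreach}_r(u,G_\sigma)$ is the set of such $v$, and $\mathrm{wcol}_r(G)=\min_\sigma\max_u|\mathrm{wreach}_r(u,G_\sigma)|$ over all total orders $\sigma$ of $V$. *)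

(* Defs.v *)
From mathcomp Require Import all_boot all_order all_fingroup.
Set Implicit Arguments. Unset Strict Implicit. Unset Printing Implicit Defensive.

(* A literal over variables 'I_n is a pair (j, b): b = true is x_j, b = false is ~x_j. *)
Definition exact_rsat (r n m : nat) (cl : 'I_m -> 'I_r -> 'I_n * bool) : Prop :=
  forall i, injective (fun l => (cl i l).1).

Definition satisfiable (r n m : nat) (cl : 'I_m -> 'I_r -> 'I_n * bool) : Prop :=
  exists a : 'I_n -> bool, forall i : 'I_m, exists l : 'I_r, a (cl i l).1 = (cl i l).2.

(* Vertices:
   inl (inl (i,k))          = u_i^k          (k < 2r)
   inl (inr (j,b))          = v_j (b = true) / v'_j (b = false)
   inr (i,l,k,t,p)          = p-th subdivision vertex (p < r-2) of copy t of the
                              subdivided edge between u_i^k and the vertex of the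
                              literal cl i l. *)
Definition GV (r n m : nat) : finType :=
  ((('I_m * 'I_(2 * r)) + ('I_n * bool)) +
   ('I_m * 'I_r * 'I_(2 * r) * bool * 'I_(r - 2)))%type.

Definition Gadj0 (r n m : nat) (cl : 'I_m -> 'I_r -> 'I_n * bool)
  (x y : GV r n m) : bool :=
  match x, y with
  | inl (inr (j, b)), inl (inr (j', b')) => [&& j == j', b & ~~ b']
  | inr (i, l, k, t, p), inr (i', l', k', t', p') =>
      [&& i == i', l == l', k == k', t == t' & p.+1 == p' :> nat]
  | inr (i, l, k, t, p), inl (inr (j, b)) => (p == 0 :> nat) && (cl i l == (j, b))
  | inr (i, l, k, t, p), inl (inl (i', k')) =>
      [&& p == r - 3 :> nat, i == i' & k == k']
  | _, _ => false
  end.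

Definition Gedge (r n m : nat) (cl : 'I_m -> 'I_r -> 'I_n * bool) : rel (GV r n m) :=
  fun x y => Gadj0 cl x y || Gadj0 cl y x.

(* A total order of V is represented by a permutation s : x <_s y iff
   s x comes before s y in the enumeration of V. *)
Definition ord_lt (V : finType) (s : {perm V}) (x y : V) : bool :=
  (enum_rank (s x) < enum_rank (s y))%N.

Definition wreachable (V : finType) (e : rel V) (r : nat) (s : {perm V}) (u v : V) : bool :=
  [&& u != v, ord_lt s u v &
   [exists k : 'I_r.+1, exists p : k.-tuple V,
      [&& path e u p, last u p == v, uniq (u :: p) &
          all (fun w => ord_lt s w v) (behead (belast u p))]]].

Definition wreach (V : finType) (e : rel V) (r : nat) (s : {perm V}) (u : V) : {set V} :=
  [set v | wreachable e r s u v].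

(* wcol_r(G) = min over total orders s of max_u |wreach_r(u, G_s)| ;
   (#|V| is an upper bound for every value, so it is a neutral start for minn) *)
Definition wcol (V : finType) (e : rel V) (r : nat) : nat :=
  \big[minn/#|V|]_(s : {perm V}) \max_(u : V) #|wreach e r s u|.

(* Main.v *)
Require Import Defs.
From mathcomp Require Import all_boot all_order all_fingroup.
From mathcomp Require Import zify.
Set Implicit Arguments. Unset Strict Implicit. Unset Printing Implicit Defensive.

Lemma ord_lt_tot (V : finType) (s : {perm V}) x y :
  x != y -> ord_lt s x y || ord_lt s y x.
Proof.
move=> nxy; rewrite /ord_lt -neq_ltn.
apply: contra nxy => /eqP /ord_inj /enum_rank_inj /perm_inj ->; by [].
Qed.

Lemma ord_lt_trans (V : finType) (s : {perm V}) x y z :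
  ord_lt s x y -> ord_lt s y z -> ord_lt s x z.
Proof. rewrite /ord_lt; exact: ltn_trans. Qed.

Lemma ord_lt_neq (V : finType) (s : {perm V}) x y : ord_lt s x y -> x != y.
Proof. by rewrite /ord_lt; apply: contraL => /eqP ->; rewrite ltnn. Qed.

Definition smax (V : finType) (s : {perm V}) (x0 : V) (q : seq V) : V :=
  foldr (fun x acc => if ord_lt s acc x then x else acc) x0 q.

Lemma smax_in (V : finType) (s : {perm V}) x0 q : smax s x0 q \in x0 :: q.
Proof.
elim: q => [|x q IH] /=; first by rewrite inE.
case: ifP => _; first by rewrite !inE eqxx !orbT.
move: IH; rewrite !inE => /orP [->//|->]; by rewrite !orbT.
Qed.

Lemma smax_ge (V : finType) (s : {perm V}) x0 q y :
  y \in x0 :: q -> y = smax s x0 q \/ ord_lt s y (smax s x0 q).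
Proof.
elim: q y => [|x q IH] y /=; first by rewrite inE => /eqP; left.
rewrite !inE; case: ifP => H.
  case/orP=> [/eqP ->|/orP [/eqP ->|yq]].
  - have := IH _ (mem_head _ _); case=> [->|h]; right=> //; exact: ord_lt_trans h H.
  - by left.
  - have := IH y; rewrite inE yq orbT; case=> // [->|h]; right=> //; exact: ord_lt_trans h H.
case/orP=> [/eqP ->|/orP [/eqP ->|yq]].
- exact: IH _ (mem_head _ _).
- have [/eqP->|nx] := boolP (x == smax s x0 q); first by left.
  by case/orP: (ord_lt_tot s nx) => h; [right|rewrite H in h].
- by apply: IH; rewrite inE yq orbT.
Qed.

Lemma reach_split (V : finType) (e : rel V) r (s : {perm V}) u q1 w q2 :
  path e u (q1 ++ w :: q2) -> uniq (u :: q1 ++ w :: q2) ->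
  size (q1 ++ w :: q2) <= r -> ord_lt s u w ->
  all (fun x => ord_lt s x w) q1 -> w \in wreach e r s u.
Proof.
move=> Hp Hu Hs Huw Hall; rewrite inE /wreachable Huw.
have Hu' : uniq (u :: rcons q1 w).
  by move: Hu; rewrite -cat_cons -cat_rcons cat_uniq => /andP [].
have -> : u != w.
  by move: Hu' => /= /andP [H _]; apply: contra H => /eqP ->; rewrite mem_rcons mem_head.
have Hk : size (rcons q1 w) < r.+1.
  by move: Hs; rewrite size_cat size_rcons /= => h; lia.
apply/existsP; exists (Ordinal Hk); apply/existsP; exists (in_tuple (rcons q1 w)) => /=.
rewrite -/(uniq (u :: rcons q1 w)) Hu' last_rcons eqxx belast_rcons /= Hall !andbT.
by move: Hp; rewrite cat_path /= rcons_path => /and3P [-> -> _].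
Qed.

Lemma reach_pre (V : finType) (e : rel V) r (s : {perm V}) u q q' w :
  path e u (q ++ q') -> uniq (u :: q ++ q') -> size (q ++ q') <= r ->
  w \in q -> ord_lt s u w -> (forall x, x \in q -> x != w -> ord_lt s x w) ->
  w \in wreach e r s u.
Proof.
move=> Hp Hu Hs wq Huw Hx; move: Hp Hu Hs Hx; case/splitPr: wq => q1 q2.
rewrite -catA cat_cons => Hp Hu Hs Hx.
apply: (reach_split Hp Hu Hs Huw).
apply/allP => x xq1; apply: Hx; first by rewrite mem_cat xq1.
move: Hu; rewrite /= cat_uniq => /andP [_ /and3P [_ H _]].
apply: contraNneq H => <-; apply/hasP; exists x => //=; by rewrite inE eqxx.
Qed.

Lemma reach_smax (V : finType) (e : rel V) r (s : {perm V}) u q q' y :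
  path e u (q ++ q') -> uniq (u :: q ++ q') -> size (q ++ q') <= r ->
  y \in q -> ord_lt s u y ->
  [/\ smax s u q \in q, ord_lt s u (smax s u q) & smax s u q \in wreach e r s u].
Proof.
move=> Hp Hu Hs yq uy.
have Hlt : ord_lt s u (smax s u q).
  case: (smax_ge s (x0:=u) (q:=q) (y:=y)); first by rewrite inE yq orbT.
    by move=> <-.
  by move=> h; exact: ord_lt_trans uy h.
have Hin : smax s u q \in q.
  move: (smax_in s u q); rewrite inE => /orP [/eqP h|//].
  by move: Hlt; rewrite h /ord_lt ltnn.
split=> //; apply: (reach_pre Hp Hu Hs Hin Hlt) => x xq nx.
case: (smax_ge s (x0:=u) (q:=q) (y:=x)); first by rewrite inE xq orbT.
  by move=> h; rewrite h eqxx in nx.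
by [].
Qed.

Lemma path_iota (V : eqType) (e : rel V) (f : nat -> V) y ys :
  path e y ys -> forall n a x, e x (f a) ->
  (forall q, a <= q -> q.+1 < a + n.+1 -> e (f q) (f q.+1)) ->
  e (f (a + n)) y -> path e x (map f (iota a n.+1) ++ y :: ys).
Proof.
move=> Hy; elim=> [|n IH] a x hx hq hl /=.
  by rewrite hx /=; move: hl; rewrite addn0 => ->.
rewrite hx /=; apply: IH.
- apply: hq => //; lia.
- move=> q h1 h2; apply: hq; lia.
- by rewrite addSnnS.
Qed.


Definition Uv r' n m (cl : 'I_m -> 'I_r'.+3 -> 'I_n * bool) i k : GV r'.+3 n m :=
  inl (inl (i, k)).
Definition Lv r' n m (cl : 'I_m -> 'I_r'.+3 -> 'I_n * bool) c : GV r'.+3 n m :=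
  inl (inr c).
Definition Sv r' n m (cl : 'I_m -> 'I_r'.+3 -> 'I_n * bool) i l k t (p : nat)
  : GV r'.+3 n m := inr (i, l, k, t, (inord p : 'I_r'.+1)).
Definition fwd r' n m (cl : 'I_m -> 'I_r'.+3 -> 'I_n * bool) i l k t :=
  map (Sv cl i l k t) (iota 0 r'.+1).
Definition bwd r' n m (cl : 'I_m -> 'I_r'.+3 -> 'I_n * bool) i l k t :=
  map (fun p => Sv cl i l k t (r' - p)) (iota 0 r'.+1).

Lemma Gedge_sym r n m (cl : 'I_m -> 'I_r -> 'I_n * bool) x y :
  Gedge cl x y = Gedge cl y x.
Proof. by rewrite /Gedge orbC. Qed.

Lemma E1 r' n m (cl : 'I_m -> 'I_r'.+3 -> 'I_n * bool) i l k t :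
  Gedge cl (Lv cl (cl i l)) (Sv cl i l k t 0).
Proof.
rewrite /Gedge /Lv /Sv; case E: (cl i l) => [j b] /=.
by rewrite E eqxx andbT inordK.
Qed.

Lemma E2 r' n m (cl : 'I_m -> 'I_r'.+3 -> 'I_n * bool) i l k t q :
  q < r' -> Gedge cl (Sv cl i l k t q) (Sv cl i l k t q.+1).
Proof.
move=> hq; rewrite /Gedge /Sv; apply/orP; left => /=.
rewrite !eqxx /= !inordK //; lia.
Qed.

Lemma E3 r' n m (cl : 'I_m -> 'I_r'.+3 -> 'I_n * bool) i l k t :
  Gedge cl (Sv cl i l k t r') (Uv cl i k).
Proof.
rewrite /Gedge /Sv /Uv; apply/orP; left => /=.
rewrite !eqxx inordK //= andbT; apply/eqP; lia.
Qed.

Lemma E4 r' n m (cl : 'I_m -> 'I_r'.+3 -> 'I_n * bool) (j : 'I_n) b :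
  Gedge cl (Lv cl (j, b)) (Lv cl (j, ~~ b)).
Proof. by rewrite /Gedge /Lv; case: b => /=; rewrite eqxx. Qed.

Lemma P1 r' n m (cl : 'I_m -> 'I_r'.+3 -> 'I_n * bool) i l k t :
  path (Gedge cl) (Lv cl (cl i l)) (fwd cl i l k t ++ [:: Uv cl i k]).
Proof.
apply: (@path_iota _ _ (Sv cl i l k t) _ [::] isT r' 0).
- exact: E1.
- move=> q _ hq; apply: E2; lia.
- rewrite add0n; exact: E3.
Qed.

Lemma P2 r' n m (cl : 'I_m -> 'I_r'.+3 -> 'I_n * bool) i l k t :
  path (Gedge cl) (Uv cl i k)
    (bwd cl i l k t ++ [:: Lv cl (cl i l); Lv cl ((cl i l).1, ~~ (cl i l).2)]).
Proof.
apply: (@path_iota _ _ (fun p => Sv cl i l k t (r' - p))).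
- by rewrite /= andbT; case: (cl i l) => j b; exact: E4.
- by rewrite Gedge_sym subn0; exact: E3.
- move=> q _ hq; rewrite Gedge_sym.
  have -> : r' - q = (r' - q.+1).+1 by lia.
  apply: E2; lia.
- by rewrite add0n subnn Gedge_sym; exact: E1.
Qed.

Lemma memS r' n m (cl : 'I_m -> 'I_r'.+3 -> 'I_n * bool) i l k t x :
  (x \in fwd cl i l k t) || (x \in bwd cl i l k t) ->
  exists p, x = Sv cl i l k t p.
Proof.
by case/orP => /mapP [p _ ->]; eexists.
Qed.

Definition isSub r n m (x : GV r n m) := if x is inr _ then true else false.

Lemma notin_fwd r' n m (cl : 'I_m -> 'I_r'.+3 -> 'I_n * bool) i l k t x :
  ~~ isSub x -> x \notin fwd cl i l k t.
Proof. by move=> h; apply/negP => /mapP [p _ E]; rewrite E in h. Qed.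

Lemma notin_bwd r' n m (cl : 'I_m -> 'I_r'.+3 -> 'I_n * bool) i l k t x :
  ~~ isSub x -> x \notin bwd cl i l k t.
Proof. by move=> h; apply/negP => /mapP [p _ E]; rewrite E in h. Qed.

Lemma Sv_inj r' n m (cl : 'I_m -> 'I_r'.+3 -> 'I_n * bool) i l k t p q :
  p <= r' -> q <= r' -> Sv cl i l k t p = Sv cl i l k t q -> p = q.
Proof.
move=> hp hq [] /(congr1 (@nat_of_ord _)); rewrite !inordK //; lia.
Qed.

Lemma uniq_fwd r' n m (cl : 'I_m -> 'I_r'.+3 -> 'I_n * bool) i l k t :
  uniq (fwd cl i l k t).
Proof.
rewrite map_inj_in_uniq ?iota_uniq // => p q; rewrite !mem_iota /= => hp hq.
apply: Sv_inj; lia.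
Qed.

Lemma uniq_bwd r' n m (cl : 'I_m -> 'I_r'.+3 -> 'I_n * bool) i l k t :
  uniq (bwd cl i l k t).
Proof.
rewrite map_inj_in_uniq ?iota_uniq // => p q; rewrite !mem_iota /= => hp hq E.
have := Sv_inj _ _ E; lia.
Qed.

Lemma U1 r' n m (cl : 'I_m -> 'I_r'.+3 -> 'I_n * bool) i l k t :
  uniq (Lv cl (cl i l) :: fwd cl i l k t ++ [:: Uv cl i k]).
Proof.
by rewrite cons_uniq mem_cat negb_or notin_fwd // mem_seq1 cat_uniq uniq_fwd has_seq1 notin_fwd.
Qed.

Lemma U2 r' n m (cl : 'I_m -> 'I_r'.+3 -> 'I_n * bool) i l k t :
  uniq (Uv cl i k :: bwd cl i l k t ++ [:: Lv cl (cl i l); Lv cl ((cl i l).1, ~~ (cl i l).2)]).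
Proof.
rewrite cons_uniq mem_cat negb_or notin_bwd // cat_uniq uniq_bwd.
have -> : ~~ has (in_mem^~ (mem (bwd cl i l k t)))
        [:: Lv cl (cl i l); Lv cl ((cl i l).1, ~~ (cl i l).2)].
  apply/hasPn => x; rewrite in_cons mem_seq1 => /orP [] /eqP -> ; exact: notin_bwd.
rewrite !inE /= andbT.
by case: (cl i l) => j b; rewrite mem_seq1; apply/eqP; rewrite /Lv => -[]; case: b.
Qed.

Lemma bigmin_ex (T : finType) (F : T -> nat) x c :
  \big[minn/x]_(s : T) F s <= c -> c < x -> exists s, F s <= c.
Proof.
move=> H hc; case: (boolP [exists s, F s <= c]) => [/existsP //|/existsPn Hn].
have : c < \big[minn/x]_(s : T) F s.
  apply: (big_ind (fun v => c < v)) => //.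
    by move=> a b ha hb; rewrite leq_min ha hb.
  by move=> i _; rewrite ltnNge Hn.
by rewrite ltnNge H.
Qed.

Lemma count_inj (V T : finType) (A : {set V}) (g : T -> V) :
  injective g -> (forall x, g x \in A) -> #|T| <= #|A|.
Proof.
move=> inj H; have := card_imset [set: T] inj; rewrite cardsT => <-.
by apply: subset_leq_card; apply/subsetP => y /imsetP [x _ ->].
Qed.

Definition key2 r' n m (x : GV r'.+3 n m) : option 'I_(2 * r'.+3) :=
  match x with inr (_, _, k, _, _) => Some k | inl (inl (_, k)) => Some k | _ => None end.
Definition key r' n m (x : GV r'.+3 n m) : option ('I_r'.+3 + 'I_n) :=
  match x with inr (_, l, _, _, _) => Some (inl l) | inl (inr (j, _)) => Some (inr j)
  | _ => None end.
Definition tkey r' n m (x : GV r'.+3 n m) : option bool :=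
  match x with inr (_, _, _, t, _) => Some t | _ => None end.

Lemma card_GV r' n m : 2 * r'.+3 <= #|GV r'.+3 n m.+1|.
Proof.
rewrite /GV !card_sum !card_prod !card_ord; lia.
Qed.

Theorem lemma3p9 (r n m : nat) (cl : 'I_m -> 'I_r -> 'I_n * bool) :
  (3 <= r)%N -> exact_rsat cl ->
  (wcol (Gedge cl) r <= 2 * r - 1)%N -> satisfiable cl.
Proof.
case: r cl => [|[|[|r']]] cl // _ Hx Hw.
case: m cl Hx Hw => [|m] cl Hx Hw; first by exists (fun _ => true); case.
have hc : 2 * r'.+3 - 1 < #|GV r'.+3 n m.+1| by have := card_GV r' n m; lia.
have [s Hs] := bigmin_ex Hw hc.
have H u : #|wreach (Gedge cl) r'.+3 s u| <= 2 * r'.+3 - 1.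
  exact: leq_trans (leq_bigmax u) Hs.
pose a j := ord_lt s (Lv cl (j, false)) (Lv cl (j, true)).
exists a => i.
case: (boolP [exists l, a (cl i l).1 == (cl i l).2]) => [/existsP [l /eqP] ?|/existsPn Hn].
  by exists l.
pose L l := Lv cl (cl i l).
pose L' l := Lv cl ((cl i l).1, ~~ (cl i l).2).
have Hf l : ord_lt s (L l) (L' l).
  have := Hn l; rewrite /L /L'; case: (cl i l) => j b /=; rewrite /a.
  case: b => /= h.
    move: h; rewrite eqb_id => h.
    have := @ord_lt_tot _ s (Lv cl (j, true)) (Lv cl (j, false)).
    rewrite (negbTE h) orbF; apply.
    by apply/eqP; rewrite /Lv => -[].
  by move: h; rewrite eqbF_neg negbK.
have [ls _ Hmin] := @arg_minnP _ (ord0 : 'I_r'.+3) xpredT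
  (fun l => nat_of_ord (enum_rank (s (L l)))) isT.
have [k Hk] : exists k, ord_lt s (Uv cl i k) (L ls).
  case: (boolP [exists k, ord_lt s (Uv cl i k) (L ls)]) => [/existsP //|/existsPn Hk].
  exfalso.
  pose g1 k := smax s (L ls) (fwd cl i ls k false ++ [:: Uv cl i k]).
  have Hg1 k : g1 k \in fwd cl i ls k false ++ [:: Uv cl i k] /\
               g1 k \in wreach (Gedge cl) r'.+3 s (L ls).
    have LU : ord_lt s (L ls) (Uv cl i k).
      have := @ord_lt_tot _ s (L ls) (Uv cl i k).
      rewrite (negbTE (Hk k)) orbF; apply.
      by rewrite /L /Lv /Uv.
    have hs : size ((fwd cl i ls k false ++ [:: Uv cl i k]) ++ [::]) <= r'.+3.
      rewrite cats0 size_cat /fwd size_map size_iota /=; lia.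
    have hp : path (Gedge cl) (L ls) ((fwd cl i ls k false ++ [:: Uv cl i k]) ++ [::]).
      by rewrite cats0; exact: P1.
    have hu : uniq (L ls :: (fwd cl i ls k false ++ [:: Uv cl i k]) ++ [::]).
      by rewrite cats0; exact: U1.
    have [] := reach_smax hp hu hs _ LU.
      by rewrite mem_cat mem_seq1 eqxx orbT.
    by [].
  have key2g k : key2 (g1 k) = Some k.
    have [h _] := Hg1 k; move: h; rewrite mem_cat => /orP [h|].
      have [p ->] : exists p, g1 k = Sv cl i ls k false p by apply: memS; rewrite h.
      by [].
    by rewrite mem_seq1 => /eqP ->.
  have inj : injective g1 by move=> x y E; have := key2g x; rewrite E key2g => -[].
  have := count_inj inj (fun k => proj2 (Hg1 k)).
  rewrite card_ord; have := H (L ls); lia.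
pose u := Uv cl i k.
have uL l : ord_lt s u (L l).
  by have := Hmin l isT; move: Hk; rewrite /ord_lt /u => ? ?; lia.
pose Q l t := bwd cl i l k t ++ [:: L l].
have PQ l t : path (Gedge cl) u (Q l t ++ [:: L' l]) by rewrite /Q -catA; exact: P2.
have UQ l t : uniq (u :: Q l t ++ [:: L' l]) by rewrite /Q -catA; exact: U2.
have SQ l t : size (Q l t ++ [:: L' l]) <= r'.+3.
  rewrite /Q !size_cat /bwd size_map size_iota /=; lia.
pose mm l t := smax s u (Q l t).
have Hm l t : [/\ mm l t \in Q l t, ord_lt s u (mm l t) &
                 mm l t \in wreach (Gedge cl) r'.+3 s u].
  apply: reach_smax (PQ l t) (UQ l t) (SQ l t) _ (uL l).
  by rewrite /Q mem_cat mem_seq1 eqxx orbT.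
have Qall l t x : x \in Q l t -> x = mm l t \/ ord_lt s x (mm l t).
  by move=> h; apply: smax_ge; rewrite in_cons h orbT.
have eqm l : mm l false = mm l true -> mm l false = L l.
  move=> E; have [h1 _ _] := Hm l false; have [h2 _ _] := Hm l true.
  move: h1 h2; rewrite -E /Q !mem_cat !mem_seq1.
  case/orP => [h1|/eqP //].
  have [p ->] : exists p, mm l false = Sv cl i l k false p by apply: memS; rewrite h1 orbT.
  case/orP => [h2|/eqP //].
  have [p' E'] : exists p', Sv cl i l k false p = Sv cl i l k true p'.
    by apply: memS; rewrite h2 orbT.
  by move: E'; rewrite /Sv => -[].
pose g (p : 'I_r'.+3 * bool) :=
  if mm p.1 false != mm p.1 true then mm p.1 p.2 else (if p.2 then L' p.1 else L p.1).
have Hg p : g p \in wreach (Gedge cl) r'.+3 s u.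
  case: p => l b; rewrite /g /=; case: ifP => [_|/negbFE/eqP E].
    by case: (Hm l b).
  have EL := eqm l E.
  case: b; last by case: (Hm l false); rewrite EL.
  have hp : path (Gedge cl) u ((Q l false ++ [:: L' l]) ++ [::]) by rewrite cats0.
  have hu : uniq (u :: (Q l false ++ [:: L' l]) ++ [::]) by rewrite cats0.
  have hs : size ((Q l false ++ [:: L' l]) ++ [::]) <= r'.+3 by rewrite cats0.
  apply: (reach_pre hp hu hs).
  - by rewrite mem_cat mem_seq1 eqxx orbT.
  - exact: ord_lt_trans (uL l) (Hf l).
  - move=> x; rewrite mem_cat mem_seq1 => /orP [xq _|/eqP ->]; last by rewrite eqxx.
    case: (Qall l false x xq); rewrite EL.
      by move=> ->; exact: Hf.
    by move=> h; exact: ord_lt_trans h (Hf l).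
have GK l t x : x \in Q l t ++ [:: L' l] ->
    key x = Some (inl l) \/ key x = Some (inr (cl i l).1).
  rewrite /Q -catA mem_cat => /orP [h|].
    have [p ->] : exists p, x = Sv cl i l k t p by apply: memS; rewrite h orbT.
    by left.
  rewrite !in_cons in_nil orbF => /orP [] /eqP ->; right; rewrite /L /L' /Lv;
    by case: (cl i l).
have Gg p : key (g p) = Some (inl p.1) \/ key (g p) = Some (inr (cl i p.1).1).
  case: p => l b; apply: (GK l b).
  change (g (l,b)) with (if mm l false != mm l true then mm l b else if b then L' l else L l).
  case: ifP => _.
    by case: (Hm l b) => h _ _; rewrite mem_cat h.
  by case: b; rewrite /Q -catA mem_cat !in_cons eqxx !orbT.
have inj : injective g.
  move=> [l b] [l' b'] E.
  have El : l = l'.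
    case: (Gg (l, b)) => h1; case: (Gg (l', b')) => h2; move: h2; rewrite -E h1 /=.
    - by case.
    - by [].
    - by [].
    - by case => /Hx.
  subst l'; congr pair; move: E; rewrite /g /=; case: ifP => [/negP ne|_].
    by case: b; case: b' => // E; rewrite E eqxx in ne.
  case: b; case: b' => //; rewrite /L /L' /Lv; case: (cl i l) => j [] //.
have := count_inj inj Hg.
rewrite card_prod card_ord card_bool; have := H u; lia.
Qed.
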